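(* Let $N\ge2$ and let $U(\omega)$, $\omega\in\mathbb{R}$, be a smooth function with values in the $N\times N$ unitary matrices. Then there exist $K\le N(N-1)/2$ pairs of indices $(m_k,n_k)$, $1\le m_k<n_k\le N$, and matrix-valued functions $T_{m_kn_k}(\omega)$, $k=1,\dots,K$, each of which is, for every $\omega$, an $N\times N$ two-level unitary acting on modes $m_k,n_k$, such that $$U(\omega)=\prod_{k=1}^{K}T_{m_kn_k}(\omega)\qquad\text{for all }\omega\in\mathbb{R}.$$
   Context: An $N\times N$ two-level unitary acting on modes $m<n$ is a unitary matrix that coincides with the identity except in the rows and columns $m,n$, where its $2\times2$ submatrix (rows/columns $m,n$) has the form $\begin{pmatrix}\mathrm{e}^{\mathrm{i}\phi}a & -b\\ \mathrm{e}^{\mathrm{i}\phi}b^* & a^*\end{pmatrix}$ with $a,b\in\mathbb{C}$, $|a|^2+|b|^2=1$, $\phi\in\mathbb{R}$ (all allowed to depend on $\omega$). ${}^*$ is complex conjugation. *)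

(* Defs.v *)
From HB Require Import structures.
From mathcomp Require Import all_boot all_order all_algebra.
From mathcomp Require Import all_classical all_reals all_analysis.
From mathcomp Require Import complex.
Set Implicit Arguments. Unset Strict Implicit. Unset Printing Implicit Defensive.
Import Order.TTheory GRing.Theory Num.Theory.
Local Open Scope ring_scope.

Definition smooth_fun (R : realType) (f : R -> R) : Prop :=
  forall (k : nat) (x : R), derivable (derive1n k f) x 1.

Definition adjmx (R : realType) (N : nat) (A : 'M[R[i]]_N) : 'M[R[i]]_N :=
  (map_mx (@conjc R) A)^T.

Definition unitary_mx (R : realType) (N : nat) (A : 'M[R[i]]_N) : Prop :=
  A *m adjmx A = 1%:M.

Definition smooth_mx_fun (R : realType) (N : nat) (U : R -> 'M[R[i]]_N) : Prop :=
  forall i j : 'I_N, smooth_fun (fun w => @complex.Re R (U w i j)) /\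
                     smooth_fun (fun w => @complex.Im R (U w i j)).

Definition expi (R : realType) (phi : R) : R[i] := Complex (cos phi) (sin phi).

Definition two_level_unitary (R : realType) (N : nat) (m n : 'I_N)
    (T : 'M[R[i]]_N) : Prop :=
  unitary_mx T /\
  (forall i j : 'I_N, ~~ ((i \in [:: m; n]) && (j \in [:: m; n])) ->
      T i j = (i == j)%:R) /\
  exists (a b : R[i]) (phi : R),
    `|a| ^+ 2 + `|b| ^+ 2 = 1 /\
    T m m = expi phi * a /\ T m n = - b /\
    T n m = expi phi * conjc b /\ T n n = conjc a.

(* Main.v *)
Require Import Defs.
From HB Require Import structures.
From mathcomp Require Import all_boot all_order all_algebra.
From mathcomp Require Import all_classical all_reals all_analysis.
From mathcomp Require Import complex.
From mathcomp Require Import ring lra zify.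
Import Order.TTheory GRing.Theory Num.Theory.
Local Open Scope ring_scope.

Section S.
Variable R : realType.
Variable n0 : nat.
Local Notation N := n0.+2.
Local Notation C := (R[i]).
Local Notation cj := (@conjc R).

Lemma expi_exists (e : R[i]) : e * conjc e = 1 -> exists phi : R, expi phi = e.
Proof.
case: e => x y /= [] h _.
have h1 : x ^+ 2 + y ^+ 2 = 1 by rewrite -h; ring.
have hx : -1 <= x <= 1 by apply/andP; split; nra.
have hc : cos (acos x) = x by rewrite acosK // in_itv.
have hs : sin (acos x) = `|y|.
  by rewrite sin_acos // -sqrtr_sqr; congr Num.sqrt; lra.
case: (lerP 0 y) => hy.
  exists (acos x); rewrite /expi hc hs ger0_norm //.
exists (- acos x); rewrite /expi cosN sinN hc hs ltr0_norm // opprK //.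
Qed.


Lemma normsq (z : C) : `|z| ^+ 2 = z * cj z.
Proof. rewrite -add_Re2_Im2; case: z => x y /=.
apply/eqP; rewrite eq_complex /=; apply/andP; split; apply/eqP; ring. Qed.

Lemma sum1 (f : 'I_N -> C) m : (forall l, l != m -> f l = 0) -> \sum_l f l = f m.
Proof. by move=> h; rewrite (bigD1 m) //= big1 ?addr0. Qed.

Lemma sum2 (f : 'I_N -> C) m n : m != n ->
  (forall l, l != m -> l != n -> f l = 0) -> \sum_l f l = f m + f n.
Proof.
move=> mn h; rewrite (bigD1 m) //= (bigD1 n) 1?eq_sym //= big1 ?addr0 // => l /andP[ln lm].
exact: h.
Qed.

Lemma adjE (A : 'M[C]_N) i j : adjmx A i j = cj (A j i).
Proof. by rewrite /adjmx !mxE. Qed.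

Lemma unitary_row (T : 'M[C]_N) i k : unitary_mx T ->
  \sum_l T i l * cj (T k l) = (i == k)%:R.
Proof.
move=> /matrixP /(_ i k); rewrite !mxE => <-; apply: eq_bigr => l _; by rewrite adjE.
Qed.

Lemma conj_nat (b : bool) : cj (b%:R) = b%:R.
Proof. exact: conjc_nat. Qed.

Lemma block_two_level (m n : 'I_N) (T : 'M[C]_N) : m != n -> unitary_mx T ->
  (forall i j : 'I_N, ~~ ((i \in [:: m; n]) && (j \in [:: m; n])) -> T i j = (i == j)%:R) ->
  two_level_unitary m n T.
Proof.
move=> mn hU hT; split => //; split => //.
have zm : forall l, l != m -> l != n -> T m l = 0.
  move=> l lm ln; rewrite hT; first by rewrite eq_sym (negbTE lm).
  by rewrite !inE (negbTE lm) (negbTE ln) andbF.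
have zn : forall l, l != m -> l != n -> T n l = 0.
  move=> l lm ln; rewrite hT; first by rewrite eq_sym (negbTE ln).
  by rewrite !inE (negbTE lm) (negbTE ln) andbF.
have h1 := unitary_row T m m hU; rewrite eqxx -[true%:R]/(1 : C) (sum2 _ _ _ mn) in h1; last first.
  by move=> l lm ln; rewrite zm // mul0r.
have h2 := unitary_row T n m hU; rewrite eq_sym (negbTE mn) -[false%:R]/(0 : C) (sum2 _ _ _ mn) in h2; last first.
  by move=> l lm ln; rewrite zn // mul0r.
have h3 := unitary_row T n n hU; rewrite eqxx -[true%:R]/(1 : C) (sum2 _ _ _ mn) in h3; last first.
  by move=> l lm ln; rewrite zn // mul0r.
move: h1 h2 h3; set al := T m m; set be := T m n; set ga := T n m; set de := T n n.
move=> h1 h2 h3.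
have [e he] : exists e, e = al * de - be * ga by eexists.
have hd : de = e * cj al.
  have : e * cj al - de = de * (al * cj al + be * cj be - 1) - be * (ga * cj al + de * cj be).
    by rewrite he; ring.
  by rewrite h1 h2 subrr mulr0 mulr0 subr0 => /eqP; rewrite subr_eq0 => /eqP.
have hg : ga = - (e * cj be).
  have : - (e * cj be) - ga = ga * (al * cj al + be * cj be - 1) - al * (ga * cj al + de * cj be).
    by rewrite he; ring.
  by rewrite h1 h2 subrr mulr0 mulr0 subr0 => /eqP; rewrite subr_eq0 => /eqP.
have he1 : e * cj e = 1.
  rewrite -h3 hg hd !rmorphN !rmorphM /= !conjcK.
  have -> : e * cj e = e * cj e * (al * cj al + be * cj be) by rewrite h1 mulr1.
  ring.
have [phi hphi] := expi_exists _ he1.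
exists (al * cj e), (- be), phi; rewrite hphi !normsq.
split.
  rewrite -h1 rmorphN rmorphM /= conjcK.
  transitivity (al * cj al * (e * cj e) + be * cj be); first ring.
  by rewrite he1 mulr1.
split.
  transitivity (al * (e * cj e)); first by rewrite he1 mulr1.
  ring.
split; first by rewrite opprK.
split; first by rewrite rmorphN hg; ring.
by rewrite hd rmorphM /= conjcK mulrC.
Qed.

Lemma cj0' : Complex (0 : R) (- 0) = 0.
Proof. by apply/eqP; rewrite eq_complex /= oppr0 !eqxx. Qed.

Ltac neqs := repeat match goal with
 | H : is_true (?a != ?b) |- context[?a == ?b] => rewrite (negbTE H)
 | H : is_true (?a != ?b) |- context[?b == ?a] => rewrite [b == a]eq_sym (negbTE H) end.

Definition mk2 (m n : 'I_N) (p q r s : C) : 'M[C]_N :=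
  \matrix_(i, k) if i == m then (if k == m then p else if k == n then q else 0)
                 else if i == n then (if k == m then r else if k == n then s else 0)
                 else (i == k)%:R.

Lemma mk2_mul m n p q r s (A : 'M[C]_N) i k : m != n ->
  (mk2 m n p q r s *m A) i k =
  if i == m then p * A m k + q * A n k
  else if i == n then r * A m k + s * A n k else A i k.
Proof.
move=> mn; rewrite mxE.
have nm : (n == m) = false by rewrite eq_sym (negbTE mn).
case: (eqVneq i m) => [->|im].
  rewrite (sum2 _ _ _ mn) => [|l lm ln]; rewrite !mxE ?eqxx ?nm //.
  by rewrite (negbTE lm) (negbTE ln) mul0r.
case: (eqVneq i n) => [->|inn].
  rewrite (sum2 _ _ _ mn) => [|l lm ln]; rewrite !mxE ?eqxx ?nm //.
  by rewrite (negbTE lm) (negbTE ln) mul0r.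
rewrite (sum1 _ i) => [|l li]; rewrite !mxE (negbTE im) (negbTE inn) ?eqxx ?mul1r //.
by rewrite eq_sym (negbTE li) mul0r.
Qed.

Lemma mk2_two_level m n p q r s : m != n ->
  p * cj p + q * cj q = 1 -> r * cj p + s * cj q = 0 -> r * cj r + s * cj s = 1 ->
  two_level_unitary m n (mk2 m n p q r s).
Proof.
move=> mn h1 h2 h3.
have nm : (n == m) = false by rewrite eq_sym (negbTE mn).
have h2' : p * cj r + q * cj s = 0.
  apply/eqP; rewrite -conjc_eq0 rmorphD !rmorphM /= !conjcK.
  by rewrite mulrC [_ * s]mulrC h2.
apply: block_two_level => //.
  apply/matrixP => i k; rewrite mk2_mul // !adjE !mxE.
  case: (eqVneq i m) => [?|im]; case: (eqVneq k m) => [?|km];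
  case: (eqVneq i n) => [?|inn]; case: (eqVneq k n) => [?|kn]; subst;
  try by rewrite eqxx in mn.
  all: neqs; rewrite ?eqxx ?nm /=; neqs.
  all: rewrite ?conjc0 ?conjc_nat ?mulr0 ?addr0 ?add0r ?mulr0n ?mulr1n ?h2' //.
  all: try by rewrite -h1.
  all: try by rewrite -h3.
  all: try by rewrite eq_sym.
  all: rewrite ?cj0' ?mulr0 ?addr0 //.
  all: idtac.
move=> i j; rewrite !inE !mxE => hij.
case: (eqVneq i m) => [?|im]; case: (eqVneq j m) => [?|jm];
  case: (eqVneq i n) => [?|inn]; case: (eqVneq j n) => [?|jn]; subst;
  try by rewrite eqxx in mn.
all: move: hij; neqs; rewrite ?eqxx ?nm //= => _; neqs => //.
Qed.

Lemma unitary_mul (A B : 'M[C]_N) : unitary_mx A -> unitary_mx B -> unitary_mx (A *m B).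
Proof.
rewrite /unitary_mx /adjmx => hA hB.
by rewrite map_mxM trmx_mul mulmxA -(mulmxA A) hB mulmx1 hA.
Qed.

Lemma adjK (A : 'M[C]_N) : adjmx (adjmx A) = A.
Proof. by apply/matrixP => i j; rewrite !adjE conjcK. Qed.

Lemma unitaryC (A : 'M[C]_N) : unitary_mx A -> adjmx A *m A = 1%:M.
Proof. exact: mulmx1C. Qed.

Lemma unitary_adj (A : 'M[C]_N) : unitary_mx A -> unitary_mx (adjmx A).
Proof. by move=> h; rewrite /unitary_mx adjK unitaryC. Qed.

Fixpoint Sprod (L : seq ('I_N * 'I_N)) (M : 'M[C]_N) : Prop :=
  match L with
  | [::] => M = 1%:M
  | p :: L' => exists T M', two_level_unitary p.1 p.2 T /\ Sprod L' M' /\ M = T *m M'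
  end.

Lemma Sprod_cat L1 L2 A B : Sprod L1 A -> Sprod L2 B -> Sprod (L1 ++ L2) (A *m B).
Proof.
elim: L1 A => [|p L1 IH] A /=; first by move=> -> hB; rewrite mul1mx.
move=> [T [M' [hT [hM' ->]]]] hB; exists T, (M' *m B); split => //; split.
  exact: IH.
by rewrite mulmxA.
Qed.

Lemma Sprod_unitary L M : Sprod L M -> unitary_mx M.
Proof.
elim: L M => [|p L IH] M /=.
  by move=> ->; rewrite /unitary_mx /adjmx map_scalar_mx tr_scalar_mx rmorph1 mul1mx.
by move=> [T [M' [[hT _] [hM' ->]]]]; apply: unitary_mul => //; apply: IH.
Qed.

Lemma Sprod_fix L M (k : 'I_N) : Sprod L M ->
  all (fun p => (k != p.1) && (k != p.2)) L ->
  forall i, M i k = (i == k)%:R /\ M k i = (k == i)%:R.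
Proof.
elim: L M => [|p L IH] M /=.
  by move=> -> _ i; rewrite !mxE.
move=> [T [M' [[_ [hT _]] [hM' ->]]]] /andP[/andP[k1 k2] hall] i.
have hTk : forall i, T i k = (i == k)%:R /\ T k i = (k == i)%:R.
  move=> i'; split; apply: hT; rewrite !inE (negbTE k1) (negbTE k2) ?andbF //.
have := IH _ hM' hall => hM.
rewrite !mxE; split.
  rewrite (sum1 _ k) => [|l lk]; first by rewrite (hM k).1 eqxx mulr1 (hTk i).1.
  by rewrite (hM l).1 (negbTE lk) mulr0.
rewrite (sum1 _ k) => [|l lk]; first by rewrite (hTk k).2 eqxx mul1r (hM i).2.
by rewrite (hTk l).2 eq_sym (negbTE lk) mul0r.
Qed.

Lemma Sprod_seq L M : Sprod L M -> exists f : nat -> 'M[C]_N,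
  (forall k, (k < size L)%N -> two_level_unitary (nth (ord0, ord0) L k).1 (nth (ord0, ord0) L k).2 (f k))
  /\ M = \prod_(k < size L) f k.
Proof.
elim: L M => [|p L IH] M /=.
  by move=> ->; exists (fun _ => 1%:M); split => //; rewrite big_ord0.
move=> [T [M' [hT [hM' ->]]]].
have [f [hf ->]] := IH _ hM'.
exists (fun k => if k is k'.+1 then f k' else T); split.
  by case=> [|k] //= hk; apply: hf.
by rewrite big_ord_recl /=.
Qed.

Lemma sum2r (f : 'I_N -> C) m n : m != n ->
  \sum_l f l = f m + f n + \sum_(l | (l != m) && (l != n)) f l.
Proof.
by move=> mn; rewrite (bigD1 m) //= (bigD1 n) 1?eq_sym //= addrA.
Qed.

Lemma mk2_su2 m n c s : m != n -> c * cj c + s * cj s = 1 ->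
  two_level_unitary m n (mk2 m n c (- cj s) s (cj c)).
Proof.
move=> mn h; apply: mk2_two_level => //; rewrite ?rmorphN ?conjcK. all: rewrite /= ?conjcK; try ring. all: rewrite -h; ring.
Qed.

Definition colp (j : 'I_N) (t : nat) : seq ('I_N * 'I_N) :=
  [seq (j, inord i) | i <- iota t (N - t)].

Lemma colp_cons j t : (t < N)%N -> colp j t = (j, inord t) :: colp j t.+1.
Proof. by move=> ht; rewrite /colp (_ : (N - t = (N - t.+1).+1)%N) //; lia. Qed.

Lemma colp_N j : colp j N = [::].
Proof. by rewrite /colp subnn. Qed.

Lemma colp_mem j t p : p \in colp j t -> p.1 = j /\ (t <= p.2)%N.
Proof.
case/mapP => i; rewrite mem_iota => /andP[h1 h2] -> /=; split => //.
rewrite inordK //; lia.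
Qed.

Fixpoint Lrec (d j : nat) : seq ('I_N * 'I_N) :=
  match d with 0 => [::] | d'.+1 => colp (inord j) j.+1 ++ Lrec d' j.+1 end.

Lemma size_Lrec d j : (d + j.+1 = N)%N -> (size (Lrec d j) * 2 = d * d.+1)%N.
Proof.
elim: d j => [|d IH] j h //=.
rewrite size_cat size_map size_iota mulnDl IH; [nia | lia].
Qed.

Lemma all_Lrec d j : (d + j.+1 = N)%N -> all (fun p => (nat_of_ord p.1 < nat_of_ord p.2)%N) (Lrec d j).
Proof.
elim: d j => [|d IH] j h //=.
rewrite all_cat; apply/andP; split; last by apply: IH; lia.
apply/allP => p /colp_mem [-> h2]; rewrite inordK; [exact: h2 | lia].
Qed.

Lemma normsq' (z : C) : z * cj z = real_complex R ((complex.Re z)^+2 + (complex.Im z)^+2).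
Proof. by rewrite add_Re2_Im2 normsq. Qed.

Lemma col_step (j : 'I_N) e : forall t, (t + e.+1 = N)%N -> (j < t)%N ->
  forall v : 'I_N -> C, (forall i : 'I_N, i != j -> (i < t)%N -> v i = 0) ->
  \sum_i v i * cj (v i) = 1 -> exists G, Sprod (colp j t) G /\ forall i, G i j = v i.
Proof.
elim: e => [|e IH] t ht jt v hv hs.
  have htN : t = n0.+1 by lia.
  subst t.
  set tt : 'I_N := inord n0.+1.
  have htt : nat_of_ord tt = n0.+1 by rewrite /tt inordK.
  have jtt : j != tt by apply/eqP => h; move: jt; rewrite h htt ltnn.
  have ttj : (tt == j) = false by rewrite eq_sym (negbTE jtt).
  rewrite (sum2 _ _ _ jtt) in hs; last first.
    move=> l lj ltt; rewrite hv ?mul0r //.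
    have := ltn_ord l; have : nat_of_ord l != nat_of_ord tt by [].
    rewrite htt; lia.
  exists (mk2 j tt (v j) (- cj (v tt)) (v tt) (cj (v j))); split.
    rewrite colp_cons // colp_N /=; exists (mk2 j tt (v j) (- cj (v tt)) (v tt) (cj (v j))), 1%:M.
    split; first exact: mk2_su2.
    by split => //; rewrite mulmx1.
  move=> i; rewrite !mxE eqxx.
  case: (eqVneq i j) => [->//|ij].
  case: (eqVneq i tt) => [->//|itt].
  rewrite hv //.
    have := ltn_ord i; have : nat_of_ord i != nat_of_ord tt by [].
    rewrite htt; lia.
have htN : (t < N)%N by lia.
set tt : 'I_N := inord t.
have htt : nat_of_ord tt = t by rewrite /tt inordK.
have jtt : j != tt by apply/eqP => h; move: jt; rewrite h htt ltnn.
have ttj : (tt == j) = false by rewrite eq_sym (negbTE jtt).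
set a := v j; set b := v tt.
set rr : R := Num.sqrt ((complex.Re a)^+2 + (complex.Im a)^+2 + ((complex.Re b)^+2 + (complex.Im b)^+2)).
set r : C := real_complex R rr.
have hr : r * r = a * cj a + b * cj b.
  rewrite !normsq' -rmorphD -rmorphM /= /rr -expr2 sqr_sqrtr //.
  by apply: addr_ge0; apply: addr_ge0; apply: sqr_ge0.
have hcr : cj r = r by rewrite conjc_real.
set c : C := if rr == 0 then 1 else a / r.
set s : C := if rr == 0 then 0 else b / r.
have [hc [hs' hcs]] : c * r = a /\ s * r = b /\ c * cj c + s * cj s = 1.
  rewrite /c /s; case: (eqVneq rr 0) => hrr.
    have h0 : (complex.Re a)^+2 + (complex.Im a)^+2 + ((complex.Re b)^+2 + (complex.Im b)^+2) = 0.
      move: hrr; rewrite /rr => /eqP; rewrite sqrtr_eq0 => h.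
      have := sqr_ge0 (complex.Re a); have := sqr_ge0 (complex.Im a); have := sqr_ge0 (complex.Re b);
      have := sqr_ge0 (complex.Im b); lra.
    have ha : a * cj a = 0.
      rewrite normsq'; apply/eqP; rewrite eq_complex /= eqxx andbT; apply/eqP.
      have := sqr_ge0 (complex.Re a); have := sqr_ge0 (complex.Im a); have := sqr_ge0 (complex.Re b);
      have := sqr_ge0 (complex.Im b); lra.
    have hb : b * cj b = 0.
      rewrite normsq'; apply/eqP; rewrite eq_complex /= eqxx andbT; apply/eqP.
      have := sqr_ge0 (complex.Re a); have := sqr_ge0 (complex.Im a); have := sqr_ge0 (complex.Re b);
      have := sqr_ge0 (complex.Im b); lra.
    move: ha hb => /eqP; rewrite mulf_eq0 conjc_eq0 orbb => /eqP ->.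
    move=> /eqP; rewrite mulf_eq0 conjc_eq0 orbb => /eqP ->.
    by rewrite /r hrr !mul0r rmorph0 mulr0 rmorph1 mulr1 addr0.
  have rn0 : r != 0 by apply: contra hrr => /eqP [] ->.
  rewrite !divfK //; split => //; split => //.
  have hm : forall x y : C, cj (x * y) = cj x * cj y by move=> x y; exact: rmorphM.
  rewrite !hm !conjc_inv hcr.
  transitivity ((a * cj a + b * cj b) / (r * r)); first by field.
  by rewrite -hr divff // mulf_neq0.
pose w i := if i == j then r else if i == tt then 0 else v i.
have [G' [hG' hG'w]] : exists G', Sprod (colp j t.+1) G' /\ forall i, G' i j = w i.
  apply: (IH t.+1) => //; first by lia.
    by apply: ltnW.
    move=> i ij it; rewrite /w (negbTE ij); case: (eqVneq i tt) => // itt.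
    apply: hv => //; have : nat_of_ord i != nat_of_ord tt by [].
    rewrite htt; lia.
  rewrite (sum2r _ _ _ jtt) in hs; rewrite (sum2r _ _ _ jtt) -hs /w eqxx ttj eqxx.
  rewrite hcr hr mul0r addr0; congr (_ + _).
  by apply: eq_bigr => i /andP[ij itt]; rewrite (negbTE ij) (negbTE itt).
exists (mk2 j tt c (- cj s) s (cj c) *m G'); split.
  rewrite colp_cons //=; exists (mk2 j tt c (- cj s) s (cj c)), G'.
  by split; [exact: mk2_su2 | split].
move=> i; rewrite mk2_mul // !hG'w /w eqxx ttj eqxx !mulr0 !addr0.
case: (eqVneq i j) => [->|ij]; first by rewrite hc.
case: (eqVneq i tt) => [->|itt]; first by rewrite ?ttj ?eqxx ?hs'.
by rewrite ?(negbTE ij) ?(negbTE itt).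
Qed.

Arguments unitaryC {A}.
Arguments Sprod_unitary {L M}.
Arguments Sprod_fix {L M k}.

Lemma col_unit (M : 'M[C]_N) k : unitary_mx M -> (forall i, M i k = (i == k)%:R) ->
  forall i, M k i = (k == i)%:R.
Proof.
move=> hM hk i; have := unitaryC hM => /matrixP /(_ i k); rewrite !mxE.
rewrite (sum1 _ k) => [|l lk]; last by rewrite hk (negbTE lk) mulr0.
rewrite adjE hk eqxx mulr1 => h.
by rewrite -[M k i]conjcK h conjc_nat eq_sym.
Qed.

Arguments col_unit {M k}.

Lemma neq_ord (a b : 'I_N) : nat_of_ord a != nat_of_ord b -> a != b.
Proof. by apply: contra => /eqP ->. Qed.

Lemma outer d : forall j, (d + j.+2 = N)%N -> forall M : 'M[C]_N, unitary_mx M ->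
  (forall i k : 'I_N, (k < j)%N -> M i k = (i == k)%:R) -> Sprod (Lrec d.+1 j) M.
Proof.
elim: d => [|d IH] j hj M hM hcol.
  have hj' : j = n0 by lia.
  subst j.
  rewrite /= colp_cons // colp_N /=.
  exists M, 1%:M; split; last by split => //; rewrite mulmx1.
  apply: block_two_level => //.
    by apply: neq_ord; rewrite !inordK //; lia.
  move=> i k hik.
  case: (ltnP k n0) => hk; first exact: hcol.
  case: (ltnP i n0) => hi; first by apply: col_unit => // l; apply: hcol.
  have inb : forall x : 'I_N, (n0 <= x)%N -> x \in [:: inord n0; inord n0.+1].
    move=> x hx; rewrite !inE.
    have : (nat_of_ord x == n0) || (nat_of_ord x == n0.+1).
      by have := ltn_ord x; lia.
    case/orP => /eqP h; apply/orP; [left|right]; apply/eqP/val_inj; rewrite /= inordK ?h //.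
  by move: hik; rewrite !inb.
have hjN : (j < N)%N by lia.
set jj : 'I_N := inord j.
have hjj : nat_of_ord jj = j by rewrite /jj inordK.
have [G [hG hGv]] : exists G, Sprod (colp jj j.+1) G /\ forall i, G i jj = M i jj.
  apply: (@col_step jj d.+1 j.+1); first by lia.
    by rewrite hjj.
    move=> i ij ilt.
    have hv : nat_of_ord i != j by rewrite -hjj; apply: contra ij => /eqP/val_inj ->.
    have hi : (i < j)%N by lia.
    by rewrite (col_unit hM (fun x => hcol x i hi)) (negbTE ij).
  have := unitaryC hM => /matrixP /(_ jj jj); rewrite !mxE eqxx -[true%:R]/(1 : C) => <-.
  by apply: eq_bigr => l _; rewrite adjE mulrC.
have hGU := Sprod_unitary hG.
have hMeq : M = G *m (adjmx G *m M) by rewrite mulmxA hGU mul1mx.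
rewrite hMeq /=; apply: Sprod_cat => //.
apply: IH; first by lia.
  by apply: unitary_mul => //; apply: unitary_adj.
move=> i k hk; rewrite !mxE.
case: (ltnP k j) => hkj.
  rewrite (sum1 _ k) => [|l lk]; last by rewrite hcol // (negbTE lk) mulr0.
  rewrite hcol // eqxx mulr1 adjE.
  have hall : all (fun p => (k != p.1) && (k != p.2)) (colp jj j.+1).
    apply/allP => p /colp_mem [-> h2]; apply/andP; split; apply: neq_ord; rewrite ?hjj; lia.
  by rewrite ((Sprod_fix hG hall) i).2 conjc_nat eq_sym.
have hkj' : k = jj by apply: val_inj; rewrite /= hjj; lia.
subst k.
have := unitaryC hGU => /matrixP /(_ i jj); rewrite !mxE => <-.
by apply: eq_bigr => l _; rewrite hGv.
Qed.
End S.

Theorem proposition1 (R : realType) (N : nat) (hN : (2 <= N)%N)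
    (U : R -> 'M[R[i]]_N)
    (hU : forall w, unitary_mx (U w)) (hsmooth : smooth_mx_fun U) :
  exists (K : nat) (mn : 'I_K -> 'I_N * 'I_N) (T : 'I_K -> R -> 'M[R[i]]_N),
    (K <= (N * (N - 1)) %/ 2)%N /\
    (forall k : 'I_K, ((mn k).1 < (mn k).2)%N) /\
    (forall (k : 'I_K) (w : R), two_level_unitary (mn k).1 (mn k).2 (T k w)) /\
    (forall w : R, U w = \prod_(k < K) T k w).
Proof.
case: N hN U hU hsmooth => [|[|n0]] // hN U hU _.
set L := Lrec n0 n0.+1 0.
have hS : forall w, @Sprod R n0 L (U w).
  move=> w; apply: (@outer R n0 n0 0) => //; lia.
have hf : forall w, exists f : nat -> 'M[R[i]]_(n0.+2),
  (forall k, (k < size L)%N -> two_level_unitary (nth (ord0, ord0) L k).1 (nth (ord0, ord0) L k).2 (f k))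
  /\ U w = \prod_(k < size L) f k.
  by move=> w; apply: Sprod_seq.
have [F hF] := choice hf.
exists (size L), (fun k => nth (ord0, ord0) L k), (fun k w => F w k).
split.
  have hs := @size_Lrec n0 n0.+1 0 ltac:(lia).
  rewrite -/L in hs.
  have -> : (n0.+2 * (n0.+2 - 1) = size L * 2)%N by rewrite hs; lia.
  by rewrite mulnK.
split.
  move=> k; have := @all_Lrec n0 n0.+1 0 ltac:(lia).
  rewrite -/L => /allP; apply; apply: mem_nth; exact: ltn_ord.
split.
  by move=> k w; apply: (hF w).1; exact: ltn_ord.
by move=> w; rewrite (hF w).2.
Qed.
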